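(* Fix an integer $d \geq 1$. Consider the multiobjective $0$--$1$ knapsack problem with $n$ objects, feasible set $\{0,1\}^n$, weight vector $w = (1, \dots, 1) \in \mathbb{R}^n$ (to be minimized), and $d$ profit vectors $v^{(1)}, \dots, v^{(d)} \in \mathbb{R}^n$ (to be maximized), where all profit entries $v^{(i)}_j$ are chosen independently and uniformly at random from $[0,1]$. Then the expected number of Pareto-optimal solutions is $\Omega_d(n^{d-1.5})$, where the constant in $\Omega_d$ may depend on $d$ but not on $n$.
   Context: In the knapsack problem, for $x, y \in \{0,1\}^n$, $y$ dominates $x$ if $w \cdot y \leq w \cdot x$ and $v^{(i)} \cdot y \geq v^{(i)} \cdot x$ for all $i \in [d]$, with at least one of these $d+1$ inequalities strict. A feasible solution $x$ is Pareto-optimal if no feasible $y$ dominates it. *)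

(* Defs.v *)
From HB Require Import structures.
From mathcomp Require Import all_boot all_order all_algebra.
From mathcomp Require Import all_classical all_reals all_analysis.
Set Implicit Arguments. Unset Strict Implicit. Unset Printing Implicit Defensive.
Import Order.TTheory GRing.Theory Num.Theory.
Local Open Scope classical_set_scope.
Local Open Scope ring_scope.

Section knapsack.
Variables (R : realType) (d n : nat).

Definition dotb (c : 'I_n -> R) (x : {ffun 'I_n -> bool}) : R :=
  \sum_(j < n) c j * (x j)%:R.

Definition dominates (w : 'I_n -> R) (v : 'I_d -> 'I_n -> R)
  (y x : {ffun 'I_n -> bool}) : bool :=
  [&& dotb w y <= dotb w x,
      [forall i, dotb (v i) x <= dotb (v i) y] &
      (dotb w y < dotb w x) || [exists i, dotb (v i) x < dotb (v i) y]].

Definition pareto_optimal (w : 'I_n -> R) (v : 'I_d -> 'I_n -> R)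
  (x : {ffun 'I_n -> bool}) : bool :=
  [forall y, ~~ dominates w v y x].

Definition num_pareto (w : 'I_n -> R) (v : 'I_d -> 'I_n -> R) : nat :=
  #|[set x | pareto_optimal w v x]|.

End knapsack.

Definition mutually_independent (disp : measure_display) (T : measurableType disp)
  (R : realType) (P : probability T R) (I : finType) (X : I -> {RV P >-> R}) : Prop :=
  forall (S : {set I}) (B : I -> set R), (forall i, measurable (B i)) ->
    P (\big[setI/setT]_(i in S) (X i @^-1` B i)) =
    (\prod_(i in S) P (X i @^-1` B i))%E.

(* Main.v *)
Require Import Defs.
From HB Require Import structures.
From mathcomp Require Import all_boot all_order all_algebra.
From mathcomp Require Import all_classical all_reals all_analysis.
From mathcomp Require Import zify ring lra measurable_realfun.
Import Order.TTheory GRing.Theory Num.Theory.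
Local Open Scope classical_set_scope.
Local Open Scope ring_scope.
Set Implicit Arguments. Unset Strict Implicit. Unset Printing Implicit Defensive.

Section boxmx.
Variables (R : realFieldType) (d : nat).

Definition boxmx (A : 'M[R]_d) :=
  (forall i, 1/2 <= A i i) /\
  (forall i k, i != k -> 0 <= A i k <= (8 * d%:R)^-1).

Lemma boxmx_tr A : boxmx A -> boxmx A^T.
Proof.
move=> [h1 h2]; split=> [i|i k ik]; rewrite mxE //.
by apply: h2; rewrite eq_sym.
Qed.

Lemma offsum (A : 'M[R]_d) (y : 'rV[R]_d) (k m : 'I_d) : boxmx A ->
  (forall i, `|y 0 i| <= `|y 0 m|) ->
  `|\sum_(i | i != k) y 0 i * A i k| <= `|y 0 m| / 8.
Proof.
move=> [_ h2] hm.
have d0 : (0 < d)%N by case: (d) k => // -[].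
apply: (le_trans (ler_norm_sum _ _ _)).
apply: (le_trans (y := \sum_(i < d) `|y 0 m| * (8 * d%:R)^-1)).
  rewrite [X in _ <= X](bigID (fun i => i != k)) /= -[X in X <= _]addr0.
  apply: lerD; last by apply: sumr_ge0 => i _; rewrite mulr_ge0 ?invr_ge0 ?mulr_ge0.
  apply: ler_sum => i ik; rewrite normrM; apply: ler_pM => //.
  have /andP[a0 a1] := h2 _ _ ik.
  by rewrite ger0_norm.
rewrite sumr_const card_ord -mulr_natr.
have dn : d%:R != 0 :> R by rewrite pnatr_eq0 -lt0n.
by rewrite le_eqVlt; apply/orP; left; apply/eqP; field.
Qed.

Lemma argmax_ex (y : 'rV[R]_d) (i0 : 'I_d) : exists m, forall i, `|y 0 i| <= `|y 0 m|.
Proof.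
exists [arg max_(i > i0) `|y 0 i|]%O.
by case: arg_maxP => // m _ H i; apply: H.
Qed.

Lemma box_ker (A : 'M[R]_d) (x : 'rV[R]_d) : boxmx A -> x *m A = 0 -> x = 0.
Proof.
move=> hA hx; apply/matrixP => j i0; rewrite (ord1 j) !mxE.
have [m hm] := argmax_ex x i0.
have e := congr1 (fun M : 'rV_d => M 0 m) hx.
rewrite /= !mxE (bigD1 m) //= in e.
have hAm : 1/2 <= `|A m m|.
  by apply: (le_trans (hA.1 m)); apply: ler_norm.
have h1 : `|x 0 m| / 2 <= `|x 0 m| / 8.
  apply: (le_trans (y := `|x 0 m * A m m|)).
    rewrite normrM; apply: le_trans (ler_wpM2l (normr_ge0 _) hAm).
    by rewrite mul1r.
  have -> : x 0 m * A m m = - \sum_(i | i != m) x 0 i * A i m.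
    by apply/eqP; rewrite -addr_eq0 e.
  by rewrite normrN offsum.
have h2 : `|x 0 m| <= 0 by lra.
apply/eqP; rewrite -normr_le0; exact: le_trans (hm i0) h2.
Qed.

Lemma box_pos (A : 'M[R]_d) (x : 'rV[R]_d) : boxmx A -> x *m A = const_mx 1 ->
  forall i, 0 < x 0 i.
Proof.
move=> hA hx i0.
have [m hm] := argmax_ex x i0.
have row k : x 0 k * A k k = 1 - \sum_(i | i != k) x 0 i * A i k.
  have e := congr1 (fun M : 'rV_d => M 0 k) hx.
  rewrite /= !mxE (bigD1 k) //= in e.
  by rewrite -e addrK.
have hAm : 1/2 <= `|A m m|.
  by apply: (le_trans (hA.1 m)); apply: ler_norm.
have h1 : `|x 0 m| / 2 <= 1 + `|x 0 m| / 8.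
  apply: (le_trans (y := `|x 0 m * A m m|)).
    rewrite normrM; apply: le_trans (ler_wpM2l (normr_ge0 _) hAm).
    by rewrite mul1r.
  rewrite row; apply: (le_trans (ler_normB _ _)).
  by rewrite normr1 lerD2l offsum.
have h2 : `|\sum_(i | i != i0) x 0 i * A i i0| <= 1/3.
  have := offsum i0 hA hm; lra.
have h3 : 0 < x 0 i0 * A i0 i0.
  rewrite row; have := ler_norm (\sum_(i | i != i0) x 0 i * A i i0); lra.
have hA0 : 0 < A i0 i0 by apply: lt_le_trans (hA.1 i0); lra.
by rewrite pmulr_lgt0 in h3.
Qed.
Lemma box_unit (A : 'M[R]_d) : boxmx A -> A \in unitmx.
Proof. by move=> hA; rewrite -row_free_unit; apply: inj_row_free => v; exact: box_ker. Qed.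
End boxmx.

Section PO.
Variables (R : realType) (d n : nat) (v : 'I_d -> 'I_n -> R).

Definition score (l : 'I_d -> R) (j : 'I_n) := \sum_(k < d) l k * v k j.

Definition Fobj (l : 'I_d -> R) (z : {ffun 'I_n -> bool}) :=
  \sum_(k < d) l k * dotb (v k) z - dotb (fun _ : 'I_n => 1) z.

Lemma FobjE l z : Fobj l z = \sum_(j < n) (z j)%:R * (score l j - 1).
Proof.
rewrite /Fobj /dotb /score.
under eq_bigr do rewrite mulr_sumr.
rewrite exchange_big /= -sumrB; apply: eq_bigr => j _.
rewrite mulrBr mulr1 mul1r mulr_sumr; congr (_ - _).
by apply: eq_bigr => k _; rewrite mulrA mulrC mulrA.
Qed.

Lemma maximizer_po (l : 'I_d -> R) (x : {ffun 'I_n -> bool}) :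
  (forall k, 0 < l k) ->
  (forall j, 1 < score l j -> x j) -> (forall j, score l j < 1 -> ~~ x j) ->
  pareto_optimal (fun _ => 1) v x.
Proof.
move=> lpos hx1 hx2; apply/forallP => y; apply/negP.
move=> /and3P[hw /forallP hv hs].
have hle : Fobj l y <= Fobj l x.
  rewrite !FobjE; apply: ler_sum => j _.
  case: (ltrgtP (score l j) 1) => h.
  - by rewrite (negbTE (hx2 _ h)) mul0r; case: (y j); rewrite ?mul1r ?mul0r // subr_le0 ltW.
  - by rewrite (hx1 _ h) mul1r; case: (y j); rewrite ?mul1r ?mul0r // subr_ge0 ltW.
  - by rewrite h subrr !mulr0.
have hlt : Fobj l x < Fobj l y.
  rewrite /Fobj.
  have hsum : \sum_(k < d) l k * dotb (v k) x <= \sum_(k < d) l k * dotb (v k) y.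
    by apply: ler_sum => k _; rewrite ler_pM2l.
  case/orP: hs => [hw'|/existsP[i hi]].
    by apply: ler_ltB.
  apply: ltr_leB => //.
  rewrite [X in _ < X](bigD1 i) //= [X in X < _](bigD1 i) //=.
  apply: ltr_leD; first by rewrite ltr_pM2l.
  by apply: ler_sum => k _; rewrite ler_pM2l.
by have := lt_le_trans hlt hle; rewrite ltxx.
Qed.
End PO.

Section Inj.
Variables (R : realType) (d n : nat) (v : 'I_d -> 'I_n -> R).
Variables (I : finType) (J : I -> 'I_d -> 'I_n).
Hypothesis Jinj : forall r r', codom (J r) =i codom (J r') -> r = r'.

Definition Mof r : 'M[R]_d := \matrix_(i, k) v k (J r i).
Definition lam r : 'rV[R]_d := const_mx 1 *m invmx (Mof r)^T.
Definition cof r : 'rV[R]_d := const_mx 1 *m invmx (Mof r).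
Definition sc r j := score v (fun k => lam r 0 k) j.
Definition Sfun r : {ffun 'I_n -> bool} :=
  [ffun j => (1 < sc r j) || (j \in codom (J r))].

Section good.
Variable r : I.
Hypothesis hb : boxmx (Mof r).

Lemma lam_eq : lam r *m (Mof r)^T = const_mx 1.
Proof. by rewrite /lam mulmxKV //; apply: box_unit; apply: boxmx_tr. Qed.

Lemma cof_eq : cof r *m Mof r = const_mx 1.
Proof. by rewrite /cof mulmxKV //; apply: box_unit. Qed.

Lemma sc_J i : sc r (J r i) = 1.
Proof.
have := congr1 (fun M : 'rV_d => M 0 i) lam_eq.
rewrite /= !mxE => <-; rewrite /sc /score; apply: eq_bigr => k _.
by rewrite !mxE.
Qed.

Lemma lam_pos k : 0 < lam r 0 k.
Proof. exact: (box_pos (boxmx_tr hb) lam_eq). Qed.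

Lemma cof_pos k : 0 < cof r 0 k.
Proof. exact: (box_pos hb cof_eq). Qed.

Lemma Sfun_po : pareto_optimal (fun _ => 1) v (Sfun r).
Proof.
apply: (maximizer_po (l := fun k => lam r 0 k)).
- exact: lam_pos.
- by move=> j h; rewrite ffunE; apply/orP; left.
- move=> j h; rewrite ffunE negb_or; apply/andP; split.
    by rewrite -leNgt ltW.
  apply/negP => /codomP[i hj]; move: h; rewrite hj; have := sc_J i; rewrite /sc => ->.
  by rewrite ltxx.
Qed.

End good.

Lemma sumx r r' : boxmx (Mof r) ->
  \sum_(k < d) (lam r' 0 k - lam r 0 k) = \sum_(i < d) cof r 0 i * (sc r' (J r i) - 1).
Proof.
move=> hb.
transitivity (\sum_(k < d) (lam r' 0 k - lam r 0 k) * (cof r *m Mof r) 0 k).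
  by apply: eq_bigr => k _; rewrite cof_eq // [X in _ * X]mxE mulr1.
under eq_bigr do rewrite [X in _ * X]mxE mulr_sumr.
rewrite exchange_big /=; apply: eq_bigr => i _.
rewrite -(sc_J hb i) /sc /score -sumrB mulr_sumr.
apply: eq_bigr => k _; rewrite [Mof r i k]mxE; ring.
Qed.

Lemma codomE r j : boxmx (Mof r) -> (j \in codom (J r)) = Sfun r j && ~~ (1 < sc r j).
Proof.
move=> hb; rewrite ffunE; case: (boolP (j \in codom (J r))) => [/codomP[i ->]|_].
  by rewrite sc_J // ltxx orbT.
by rewrite orbF andbN.
Qed.

Lemma ge1 r r' i : boxmx (Mof r) -> boxmx (Mof r') -> Sfun r = Sfun r' -> 1 <= sc r' (J r i).
Proof.
move=> hb hb' e.
have : Sfun r (J r i) by rewrite ffunE codom_f orbT.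
rewrite e ffunE => /orP[/ltW //|/codomP[i' ->]].
by rewrite sc_J.
Qed.

Lemma Sfun_inj r r' : boxmx (Mof r) -> boxmx (Mof r') -> Sfun r = Sfun r' -> r = r'.
Proof.
move=> hb hb' e.
have t1 : forall i, 0 <= cof r 0 i * (sc r' (J r i) - 1).
  by move=> i; apply: mulr_ge0; [exact: ltW (cof_pos hb i) | rewrite subr_ge0; exact: ge1 hb hb' e].
have t2 : forall i, 0 <= cof r' 0 i * (sc r (J r' i) - 1).
  by move=> i; apply: mulr_ge0; [exact: ltW (cof_pos hb' i) | rewrite subr_ge0; exact: ge1 hb' hb (esym e)].
have s1 := sumx r' hb; have s2 := sumx r hb'.
have s0 : \sum_(i < d) cof r 0 i * (sc r' (J r i) - 1) = 0.
  apply/eqP; rewrite eq_le; apply/andP; split; last by apply: sumr_ge0 => i _; apply: t1.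
  rewrite -s1 -[X in X <= _]opprK oppr_le0 -sumrN.
  rewrite (eq_bigr (fun k => lam r 0 k - lam r' 0 k)); last by move=> k _; rewrite opprB.
  by rewrite s2 sumr_ge0 // => i _; apply: t2.
have hz : forall i, sc r' (J r i) = 1.
  move=> i; have := (@psumr_eq0P _ _ _ _ (fun i _ => t1 i) s0 i isT).
  move/eqP; rewrite mulf_eq0 gt_eqF ?cof_pos //= subr_eq0 => /eqP //.
have hl : lam r' = lam r.
  apply/eqP; rewrite -subr_eq0; apply/eqP.
  apply: (box_ker (boxmx_tr hb)); apply/matrixP => j i; rewrite (ord1 j) !mxE.
  transitivity (sc r' (J r i) - sc r (J r i)); last by rewrite hz sc_J // subrr.
  rewrite /sc /score -sumrB; apply: eq_bigr => k _; rewrite !mxE; ring.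
apply: Jinj => j; rewrite (codomE _ hb) (codomE _ hb') e /sc hl //.
Qed.

Definition boxb (A : 'M[R]_d) := [forall i, 1/2 <= A i i] &&
  [forall i, forall k, (i != k) ==> (0 <= A i k <= (8 * d%:R)^-1)].
Lemma boxbP A : boxb A -> boxmx A.
Proof.
move=> /andP[/forallP h1 /forallP h2]; split => // i k ik.
by have /forallP /(_ k) := h2 i; rewrite ik.
Qed.

Lemma count_bound : (#|[set r | boxb (Mof r)]%SET| <= num_pareto (fun _ : 'I_n => 1%R) v)%N.
Proof.
rewrite /num_pareto -(@card_in_imset _ _ Sfun); last first.
  by move=> r r'; rewrite !inE => /boxbP hb /boxbP hb'; apply: Sfun_inj.
apply: subset_leq_card; apply/fintype.subsetP => x /finset.imsetP[r]; rewrite inE => /boxbP hb ->.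
by apply: classical_sets.mem_set; apply: Sfun_po.
Qed.
End Inj.

Lemma bigsetI_mem (U : Type) (I : eqType) (s : seq I) (F : I -> set U) t :
  (\big[setI/setT]_(i <- s) F i) t -> forall i, i \in s -> F i t.
Proof.
elim: s => [|a s IH] //=; rewrite big_cons => -[ha hs] i.
by rewrite in_cons => /orP[/eqP -> //|]; apply: IH.
Qed.

Section Jdef.
Variables (d m n : nat) (hm : (d * m <= n)%N).

Lemma Jlt (r : {ffun 'I_d -> 'I_m}) (i : 'I_d) : (i * m + r i < n)%N.
Proof. have := ltn_ord (r i); have := ltn_ord i; nia. Qed.

Definition J r i : 'I_n := Ordinal (Jlt r i).

Lemma Jeq r r' i i' : J r i = J r' i' -> i = i' /\ r i = r' i'.
Proof.
move=> /(congr1 val) /= h.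
have m0 : (0 < m)%N by case: (r i) => k /= /(leq_ltn_trans (leq0n k)).
have e1 : r i = r' i' :> nat.
  by have := congr1 (modn^~ m) h; rewrite /= !modnMDl !modn_small.
split; last exact: val_inj.
apply: val_inj => /=; move: h; rewrite e1 => /eqP; rewrite eqn_add2r eqn_pmul2r // => /eqP //.
Qed.

Lemma Jinj r r' : codom (J r) =i codom (J r') -> r = r'.
Proof.
move=> e; apply/ffunP => i.
have : J r i \in codom (J r') by rewrite -e codom_f.
by case/codomP => i' /Jeq [<-].
Qed.
End Jdef.

Lemma unif_itv (R : realType) (a b : R) : 0 <= a -> a <= b -> b <= 1 ->
  uniform_prob (@ltr01 R) `[a, b] = (b - a)%:E.
Proof.
move=> a0 ab b1.
rewrite /uniform_prob.
rewrite (eq_integral (fun=> 1%:E)); last first.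
  move=> x; rewrite inE/= in_itv/= => /andP[ax xb].
  by rewrite /uniform_pdf (le_trans a0 ax) (le_trans xb b1) subr0 invr1.
rewrite integral_cst//= mul1e lebesgue_measure_itv/= lte_fin.
case: ltgtP ab => // -> _; by rewrite subrr.
Qed.

Section Prob.
Variables (R : realType) (d m n : nat) (hm : (d * m <= n)%N) (hd : (0 < d)%N).
Variables (disp : measure_display) (T : measurableType disp) (P : probability T R)
  (V : 'I_d -> 'I_n -> {RV P >-> R}).
Hypothesis indep : mutually_independent (fun ij : 'I_d * 'I_n => V ij.1 ij.2).
Hypothesis unif : forall i j, distribution P (V i j) = uniform_prob (@ltr01 R).

Definition lo (p : 'I_d * 'I_d) : R := if p.1 == p.2 then 1/2 else 0.
Definition hi (p : 'I_d * 'I_d) : R := if p.1 == p.2 then 1 else (8 * d%:R)^-1.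
Definition Ib p : set R := `[lo p, hi p]%classic.
Definition Ev (r : {ffun 'I_d -> 'I_m}) : set T :=
  \big[setI/setT]_(p : 'I_d * 'I_d) (V p.1 (J hm r p.2) @^-1` Ib p).

Lemma lohi p : [/\ 0 <= lo p, lo p <= hi p & hi p <= 1].
Proof.
have d1 : 1 <= d%:R :> R by rewrite ler1n.
have h8 : 1 <= 8 * d%:R :> R by lra.
have h0 : 0 <= (8 * d%:R :> R)^-1 by rewrite invr_ge0; lra.
have h1 : (8 * d%:R :> R)^-1 <= 1 by rewrite invf_le1; lra.
by rewrite /lo /hi; case: ifP => _; split => //; lra.
Qed.

Lemma Ev_meas r : measurable (Ev r).
Proof.
rewrite /Ev; apply: (big_ind (fun A => measurable A)) => //.
- by move=> A B; apply: measurableI.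
- by move=> p _; apply: measurable_funPTI; apply: measurable_itv.
Qed.

Lemma Ev_prob r : P (Ev r) = (\prod_(p : 'I_d * 'I_d) (hi p - lo p))%:E.
Proof.
pose g (p : 'I_d * 'I_d) : 'I_d * 'I_n := (p.1, J hm r p.2).
have ginj : injective g.
  move=> [k i] [k' i'] [/= -> h].
  by have /Jeq[-> _] : J hm r i = J hm r i' by apply: val_inj.
pose B (q : 'I_d * 'I_n) : set R :=
  if [pick i | q.2 == J hm r i] is Some i then Ib (q.1, i) else setT.
have hB p : B (g p) = Ib p.
  rewrite /B /=; case: pickP => [i /eqP /esym /Jeq [-> _]|/(_ p.2)].
    by case: p.
  by rewrite eqxx.
have mB q : measurable (B q).
  by rewrite /B; case: pickP => [i _|_]; [apply: measurable_itv|apply: measurableT].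
have := indep (g @: finset.setT) mB.
rewrite big_imset /=; last by move=> x y _ _; apply: ginj.
rewrite big_imset /=; last by move=> x y _ _; apply: ginj.
move=> h.
have e1 : \big[setI/setT]_(i in finset.setT) (V i.1 (J hm r i.2) @^-1` B (g i)) = Ev r.
  by rewrite /Ev; apply: eq_big => [p|p _]; [rewrite finset.in_setT | rewrite hB].
have e2 : (\prod_(i in finset.setT) P (V i.1 (J hm r i.2) @^-1` B (g i)) =
     \prod_p (hi p - lo p)%:E)%E.
  apply: eq_big => [p|p _]; first by rewrite finset.in_setT.
  rewrite hB; have := unif p.1 (J hm r p.2).
  move/(congr1 (fun mu : set R -> \bar R => mu (Ib p))).
  rewrite /= /Ib; case: (lohi p) => h1 h2 h3; rewrite unif_itv // => <- //.
by rewrite -e1 h e2 prodEFin.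
Qed.

Lemma Ev_box r t : Ev r t -> boxb (Mof (fun i j => V i j t) (J hm) r).
Proof.
move=> h.
have hp p : lo p <= V p.1 (J hm r p.2) t <= hi p.
  have := bigsetI_mem h (mem_index_enum p).
  by rewrite /Ib /= in_itv.
apply/andP; split; apply/forallP => i.
  by rewrite mxE; have := hp (i, i); rewrite /lo /hi /= eqxx => /andP[].
apply/forallP => k; apply/implyP => ik; rewrite mxE.
by have := hp (k, i); rewrite /lo /hi /= eq_sym (negbTE ik).
Qed.
End Prob.

Lemma le_int_nm d (T : measurableType d) (R : realType) (mu : {measure set T -> \bar R})
  (f g : T -> \bar R) : (forall x, (0 <= g x)%E) -> (forall x, (g x <= f x)%E) ->
  (\int[mu]_x g x <= \int[mu]_x f x)%E.
Proof.
move=> g0 gf.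
have f0 : forall x, (0 <= f x)%E by move=> x; exact: le_trans (g0 x) (gf x).
rewrite (ge0_integralTE mu g0) (ge0_integralTE mu f0) /=.
apply: ge_ereal_sup => _ [h hg <-]; apply: ereal_sup_ubound; exists h => //.
by move=> x; exact: le_trans (hg x) (gf x).
Qed.

Unset Implicit Arguments. Set Strict Implicit.

Theorem theorem3 (R : realType) (d : nat) (hd : (1 <= d)%N) :
  exists c : R, 0 < c /\
  exists N : nat, forall n : nat, (N <= n)%N ->
  forall (disp : measure_display) (T : measurableType disp)
         (P : probability T R) (V : 'I_d -> 'I_n -> {RV P >-> R}),
    mutually_independent (fun ij : 'I_d * 'I_n => V ij.1 ij.2) ->
    (forall i j, distribution P (V i j) = uniform_prob (@ltr01 R)) ->
    ((c * (n%:R `^ (d%:R - 3 / 2)))%:E <=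
      'E_P[fun t => (num_pareto (fun _ : 'I_n => 1%R) (fun i j => V i j t))%:R%R])%E.
Proof.
pose pr : R := \prod_(p : 'I_d * 'I_d) (hi R p - lo R p).
have prpos : 0 < pr.
  have d1 : 1 <= d%:R :> R by rewrite ler1n.
  apply: prodr_gt0 => p _; rewrite subr_gt0 /hi /lo; case: ifP => _; first lra.
  by rewrite invr_gt0; lra.
have dpos : (0 < d)%N by [].
have d1 : 1 <= d%:R :> R by rewrite ler1n.
exists (pr / (2 * d%:R) ^+ d); split.
  by rewrite divr_gt0 // exprn_gt0 //; lra.
exists (2 * d)%N => n hn disp T P V indep unif.
pose m := (n %/ d)%N.
have hm : (d * m <= n)%N by rewrite mulnC leq_trunc_div.
pose v t := fun i j => V i j t.
have key : (\sum_(r : {ffun 'I_d -> 'I_m}) P (Ev hm V r) <=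
   'E_P[fun t => (num_pareto (fun _ : 'I_n => 1%R) (fun i j => V i j t))%:R%R])%E.
  rewrite expectation.unlock.
  have hsum : (\sum_(r : {ffun 'I_d -> 'I_m}) P (Ev hm V r) =
      \int[P]_t (\sum_(r : {ffun 'I_d -> 'I_m}) (\1_(Ev hm V r) t)%:E))%E.
    rewrite ge0_integral_sum.
    - by apply: eq_bigr => r _; rewrite integral_indic ?setIT //; exact: Ev_meas.
    - by [].
    - by move=> r; apply/measurable_EFinP/measurable_indic/Ev_meas.
    - by move=> r t _; rewrite lee_fin indicE ler0n.
  rewrite hsum; apply: le_int_nm.
    by move=> t; apply: sume_ge0 => r _; rewrite lee_fin indicE ler0n.
  move=> t; rewrite sumEFin lee_fin.
  apply: (le_trans (y := (#|[set r | boxb (Mof (v t) (J hm) r)]%SET|)%:R)).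
    apply: (le_trans (y := \sum_(r : {ffun 'I_d -> 'I_m}) (boxb (Mof (v t) (J hm) r) : nat)%:R)).
      apply: ler_sum => r _; rewrite indicE.
      case: (boolP (t \in Ev hm V r)) => [/set_mem/Ev_box -> //|_].
      by rewrite ler0n.
    rewrite -natr_sum ler_nat -sum1_card; apply/eq_leq.
    rewrite [RHS]big_mkcond; apply: eq_bigr => r _.
    by rewrite inE; case: (boxb _).
  by rewrite ler_nat; apply: count_bound; apply: Jinj.
have e : (\sum_(r : {ffun 'I_d -> 'I_m}) P (Ev hm V r) = ((m ^ d)%:R * pr)%:E)%E.
  rewrite (eq_bigr (fun _ => pr%:E)); last first.
    by move=> r _; rewrite (Ev_prob hm dpos indep unif).
  by rewrite sumEFin sumr_const card_ffun !card_ord mulr_natl.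
rewrite e in key; apply: le_trans key; rewrite lee_fin.
have hn' : (n <= 2 * d * m)%N.
  have := divn_eq n d; have := ltn_pmod n dpos; rewrite -/m; nia.
have h1 : n%:R `^ (d%:R - 3/2) <= n%:R ^+ d :> R.
  have n1 : 1 <= n%:R :> R.
    by rewrite ler1n; apply: leq_trans hn; rewrite muln_gt0.
  by rewrite -powR_mulrn //; apply: ler_powR => //; rewrite gerBl.
have h2 : n%:R ^+ d <= (2 * d%:R) ^+ d * (m ^ d)%:R :> R.
  rewrite natrX -exprMn; apply: lerXn2r; rewrite ?nnegrE ?mulr_ge0 ?ler0n //.
  by rewrite (_ : 2 * d%:R * m%:R = (2 * d * m)%:R) ?ler_nat // !natrM.
have q0 : 0 < (2 * d%:R) ^+ d :> R by rewrite exprn_gt0 //; lra.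
apply: le_trans (ler_wpM2l _ (le_trans h1 h2)) _.
  by rewrite divr_ge0 // ltW.
have -> : pr / (2 * d%:R) ^+ d * ((2 * d%:R) ^+ d * (m ^ d)%:R) = (m ^ d)%:R * pr.
  by field; rewrite gt_eqF.
by [].
Qed.
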